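(* Let $X$ and $Y$ be topological spaces, $Z$ a metric space, and $f:X\times Y\to Z$ a mapping. Suppose $Y$ has a countable base and that for every $y\in Y$ the mapping $f^y$ is quasicontinuous. Then there is a residual set $R\subset X$ such that for every $(a,b)\in R\times Y$, $f$ is continuous at $(a,b)$ provided $f_a$ is continuous at $b$.
   Context: $f_x(y)=f^y(x)=f(x,y)$. A mapping $g:X\to Z$ is quasicontinuous at $a$ if for each neighborhood $U$ of $a$ and each neighborhood $W$ of $g(a)$ there is an open $O$ with $\emptyset\ne O\subset U$ and $g(O)\subset W$; quasicontinuous means quasicontinuous at every point. Residual means containing a countable intersection of dense open sets. *)

(* Defs.v *)
From Stdlib Require Import Reals.
Open Scope R_scope.
Set Implicit Arguments.

Record topology (T : Type) := Topology {
  open : (T -> Prop) -> Prop;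
  open_full : open (fun _ => True);
  open_inter : forall U V, open U -> open V -> open (fun x => U x /\ V x);
  open_union : forall F : (T -> Prop) -> Prop,
      (forall U, F U -> open U) -> open (fun x => exists U, F U /\ U x)
}.

Record metric (T : Type) := Metric {
  dist : T -> T -> R;
  dist_nonneg : forall x y, 0 <= dist x y;
  dist_eq0 : forall x y, dist x y = 0 <-> x = y;
  dist_sym : forall x y, dist x y = dist y x;
  dist_tri : forall x y z, dist x z <= dist x y + dist y z
}.

Definition ball T (d : metric T) (c : T) (r : R) : T -> Prop :=
  fun z => dist d c z < r.

Definition metric_open T (d : metric T) (W : T -> Prop) : Prop :=
  forall z, W z -> exists r, 0 < r /\ forall w, ball d z r w -> W w.

Definition nbhd T (tau : topology T) (a : T) (N : T -> Prop) : Prop :=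
  exists U, open tau U /\ U a /\ forall x, U x -> N x.

Definition metric_nbhd T (d : metric T) (z : T) (N : T -> Prop) : Prop :=
  exists W, metric_open d W /\ W z /\ forall w, W w -> N w.

Definition prod_open X Y (tX : topology X) (tY : topology Y)
  (W : X * Y -> Prop) : Prop :=
  forall p, W p -> exists U V, open tX U /\ open tY V /\ U (fst p) /\ V (snd p) /\
     forall x y, U x -> V y -> W (x, y).

Definition continuous_at_gen A (op : (A -> Prop) -> Prop) Z (d : metric Z)
  (g : A -> Z) (a : A) : Prop :=
  forall N, metric_nbhd d (g a) N ->
    exists U, op U /\ U a /\ forall x, U x -> N (g x).

Definition continuous_at A (tA : topology A) Z (d : metric Z)
  (g : A -> Z) (a : A) : Prop := continuous_at_gen (open tA) d g a.

Definition quasicontinuous_at A (tA : topology A) Z (d : metric Z)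
  (g : A -> Z) (a : A) : Prop :=
  forall U W, nbhd tA a U -> metric_nbhd d (g a) W ->
    exists O, open tA O /\ (exists x, O x) /\
      (forall x, O x -> U x) /\ (forall x, O x -> W (g x)).

Definition quasicontinuous A (tA : topology A) Z (d : metric Z)
  (g : A -> Z) : Prop := forall a, quasicontinuous_at tA d g a.

Definition countable_base Y (tY : topology Y) : Prop :=
  exists B : nat -> (Y -> Prop), (forall n, open tY (B n)) /\
    forall V y, open tY V -> V y -> exists n, B n y /\ forall z, B n z -> V z.

Definition dense X (tX : topology X) (D : X -> Prop) : Prop :=
  forall U, open tX U -> (exists x, U x) -> exists x, U x /\ D x.

Definition residual X (tX : topology X) (R0 : X -> Prop) : Prop :=
  exists D : nat -> (X -> Prop),
    (forall n, open tX (D n) /\ dense tX (D n)) /\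
    forall x, (forall n, D n x) -> R0 x.

(* Main.v *)
Require Import Defs.
From Stdlib Require Import Reals Lra Lia Classical Cantor.
Open Scope R_scope.
Set Implicit Arguments.

Definition U_of X (tX : topology X) (P : (X -> Prop) -> Prop) : X -> Prop :=
  fun x => exists O, (open tX O /\ P O) /\ O x.

Definition S_of X (tX : topology X) (P : (X -> Prop) -> Prop) : X -> Prop :=
  U_of tX (fun O => P O \/ forall z, O z -> ~ U_of tX P z).

Lemma S_open X (tX : topology X) P : open tX (S_of tX P).
Proof. unfold S_of, U_of. apply (open_union tX). intros U [H _]; exact H. Qed.

Lemma S_dense X (tX : topology X) P : dense tX (S_of tX P).
Proof.
  intros U HU [x0 Hx0].
  destruct (classic (exists z, U z /\ U_of tX P z)) as [[z [Hz [O [[HO HP] Oz]]]]|Hn].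
  - exists z; split; auto. exists O; split; auto.
  - exists x0; split; auto. exists U; repeat split; auto.
    right. intros z Uz Hz. apply Hn; eauto.
Qed.

Lemma inter_dense X (tX : topology X) A B :
  open tX A -> dense tX A -> open tX B -> dense tX B ->
  dense tX (fun x => A x /\ B x).
Proof.
  intros oA dA oB dB U HU Hne.
  destruct (dA U HU Hne) as [x1 [H1 H2]].
  destruct (dB (fun x => U x /\ A x) (open_inter tX _ _ HU oA)) as [x2 [[H3 H4] H5]].
  - exists x1; auto.
  - exists x2; auto.
Qed.

Lemma ball_open Z (d : metric Z) c r : metric_open d (ball d c r).
Proof.
  intros z Hz. unfold ball in *. exists (r - Defs.dist d c z). split; [lra|].
  intros w Hw. pose proof (Defs.dist_tri d c z w). lra.
Qed.

Lemma ball_nbhd Z (d : metric Z) c r : 0 < r -> metric_nbhd d c (ball d c r).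
Proof.
  intros Hr. exists (ball d c r). split; [apply ball_open|]. split; auto.
  unfold ball. rewrite (proj2 (Defs.dist_eq0 d c c) eq_refl). exact Hr.
Qed.

Lemma open_nbhd X (tX : topology X) O x : open tX O -> O x -> nbhd tX x O.
Proof. intros; exists O; auto. Qed.

Theorem corollary3p5 (X Y Z : Type) (tX : topology X) (tY : topology Y)
  (d : metric Z) (f : X * Y -> Z) :
  countable_base tY ->
  (forall y : Y, quasicontinuous tX d (fun x => f (x, y))) ->
  exists R0 : X -> Prop, residual tX R0 /\
    forall a b, R0 a ->
      continuous_at tY d (fun y => f (a, y)) b ->
      continuous_at_gen (prod_open tX tY) d f (a, b).
Proof.
  intros [B [HBo HB]] Hq.
  set (e := fun k : nat => / INR (S k)).
  assert (He : forall k, 0 < e k).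
  { intro k. unfold e. apply Rinv_0_lt_compat, lt_0_INR; lia. }
  set (PA := fun n k (O : X -> Prop) => exists y y', B n y /\ B n y' /\
          forall x, O x -> Defs.dist d (f (x, y)) (f (x, y')) > e k).
  set (PC := fun n k (O : X -> Prop) => forall x x' y y', O x -> O x' -> B n y -> B n y' ->
          Defs.dist d (f (x, y)) (f (x', y')) <= 6 * e k).
  exists (fun a => forall n k, S_of tX (PA n k) a /\ S_of tX (PC n k) a).
  split.
  { exists (fun m x => S_of tX (PA (fst (of_nat m)) (snd (of_nat m))) x /\
                     S_of tX (PC (fst (of_nat m)) (snd (of_nat m))) x).
    split.
    - intro m. split.
      + apply open_inter; apply S_open.
      + apply inter_dense; (apply S_open || apply S_dense).
    - intros x Hx n k. specialize (Hx (to_nat (n, k))).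
      rewrite cancel_of_to in Hx. exact Hx. }
  intros a b HR Hcont N [W [HWo [HWa HWN]]].
  destruct (HWo _ HWa) as [r [Hr Hball]].
  destruct (archimed_cor1 (r / 6)) as [N0 [HN0 HN0p]]; [lra|].
  set (k := pred N0).
  assert (Hek : 6 * e k < r).
  { unfold e, k. replace (S (pred N0)) with N0 by lia. lra. }
  pose proof (He k) as Hek0.
  destruct (Hcont (ball d (f (a, b)) (e k / 2))) as [V [HVo [HVb HV]]].
  { apply ball_nbhd; lra. }
  destruct (HB V b HVo HVb) as [n [Hnb HnV]].
  destruct (HR n k) as [[OA [[HOA HOAc] OAa]] [OC [[HOC HOCc] OCa]]].
  assert (extA : forall z, OA z -> ~ U_of tX (PA n k) z).
  { destruct HOAc as [[y [y' [Hy [Hy' Hd]]]]|H]; [|exact H].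
    exfalso. specialize (Hd a OAa).
    pose proof (HV y (HnV y Hy)) as H1. pose proof (HV y' (HnV y' Hy')) as H2.
    unfold ball in H1, H2.
    pose proof (Defs.dist_tri d (f (a, y)) (f (a, b)) (f (a, y'))).
    rewrite (Defs.dist_sym d (f (a, y)) (f (a, b))) in H. lra. }
  destruct HOCc as [HP|extC].
  - exists (fun p => OC (fst p) /\ B n (snd p)). split; [|split].
    + intros [x y] [Hx Hy]. exists OC, (B n). repeat split; auto.
    + simpl; auto.
    + intros [x y] [Hx Hy]. apply HWN, Hball. unfold ball.
      pose proof (HP a x b y OCa Hx Hnb Hy). simpl. lra.
  - exfalso.
    destruct (Hq b a (fun z => OA z /\ OC z) (ball d (f (a, b)) (e k)))
      as [O0 [HO0 [[z0 Hz0] [HO0s HO0b]]]].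
    { apply open_nbhd; auto. apply open_inter; auto. }
    { apply ball_nbhd; lra. }
    assert (K : forall x y, O0 x -> B n y -> Defs.dist d (f (x, y)) (f (a, b)) <= 3 * e k).
    { intros x y Hx Hy.
      destruct (Hq y x O0 (ball d (f (x, y)) (e k))) as [O1 [HO1 [[z1 Hz1] [HO1s HO1b]]]].
      { apply open_nbhd; auto. }
      { apply ball_nbhd; lra. }
      destruct (classic (exists z, O1 z /\ Defs.dist d (f (z, y)) (f (z, b)) <= e k))
        as [[z [Hz Hzd]]|Hn].
      - pose proof (HO1b z Hz) as H1. pose proof (HO0b z (HO1s z Hz)) as H2.
        unfold ball in H1, H2. simpl in H1, H2.
        pose proof (Defs.dist_tri d (f (x, y)) (f (z, y)) (f (a, b))).
        pose proof (Defs.dist_tri d (f (z, y)) (f (z, b)) (f (a, b))).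
        rewrite (Defs.dist_sym d (f (z, b)) (f (a, b))) in H0. lra.
      - exfalso. apply (extA z1 (proj1 (HO0s z1 (HO1s z1 Hz1)))).
        exists O1. split; auto. split; auto.
        exists y, b. repeat split; auto. intros z Hz.
        apply Rnot_le_lt. intro Hc. apply Hn. eauto. }
    apply (extC z0 (proj2 (HO0s z0 Hz0))).
    exists O0. split; auto. split; auto.
    intros x x' y y' Hx Hx' Hy Hy'.
    pose proof (K x y Hx Hy). pose proof (K x' y' Hx' Hy').
    pose proof (Defs.dist_tri d (f (x, y)) (f (a, b)) (f (x', y'))).
    rewrite (Defs.dist_sym d (f (a, b)) (f (x', y'))) in H1. lra.
Qed.
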